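(* Let $(\Omega,\rho)$ be a metric space, $\mathcal{F}\subseteq[0,1]^{\Omega}$ a class of measurable functions, and $\mathcal{D}$ a distribution over $\Omega\times[0,1]$ with marginal $\mu$ on $\Omega$ which is realizable by $\mathcal{F}$. Then for every $\delta\in(0,1)$ and $n\in\mathbb{N}$, with probability at least $1-\delta$ over $S\sim\mathcal{D}^n$, for all $f\in\mathcal{F}$: \[ L_\mathcal{D}(f) \leq 1.01\,L_S(f) +\inf_{\alpha\geq0}\left(\alpha+\frac{205\log \mathcal{N}_{[\,]}(\mathcal{F},L_1(\mu),\alpha)}{n}\right) +\frac{205\log(1/\delta)}{n}. \]
   Context: For measurable $f:\Omega\to[0,1]$, $L_\mathcal{D}(f):=\mathbb{E}_{(X,Y)\sim\mathcal{D}}|f(X)-Y|$ and, for $S=(X_i,Y_i)_{i=1}^n$, $L_S(f):=\frac1n\sum_{i=1}^n|f(X_i)-Y_i|$. $\mathcal{D}$ is realizable by $\mathcal{F}$ if there exists $f^*\in\mathcal{F}$ with $L_\mathcal{D}(f^* )=0$. A bracket $[l,u]$ ($l,u:\Omega\to[0,1]$) contains $f$ if $l\le f\le u$; it is an $\alpha$-bracket in $L_1(\mu)$ if $\int|u-l|d\mu\le\alpha$; $\mathcal{N}_{[\,]}(\mathcal{F},L_1(\mu),\alpha)$ is the minimal number of $\alpha$-brackets covering $\mathcal{F}$. *)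

(* Defs.v *)
From HB Require Import structures.
From mathcomp Require Import all_boot all_order all_algebra.
From mathcomp Require Import all_classical all_reals all_analysis.
Set Implicit Arguments. Unset Strict Implicit. Unset Printing Implicit Defensive.
Import Order.TTheory GRing.Theory Num.Theory.
Local Open Scope classical_set_scope.
Local Open Scope ring_scope.

(* Nonempty (pointed) metric spaces.  Omega is nonempty anyway since D is a
   probability measure on Omega x [0,1]; the point is only needed by the library's
   generated-sigma-algebra construction. *)
#[short(type="pointedMetricType")]
HB.structure Definition PointedMetric (K : numDomainType) :=
  { M of Metric K M & isPointed M }.

Notation Borel M := (g_sigma_algebraType (@open M)).

Section defs.
Context {R : realType} {d : measure_display} {T : measurableType d}.
Local Open Scope ereal_scope.

Definition risk (D : set (T * R) -> \bar R) (f : T -> R) : \bar R :=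
  \int[D]_z (`| f z.1 - z.2 |)%:E.

Definition emp_risk (n : nat) (S : n.-tuple (T * R)) (f : T -> R) : R :=
  (n%:R^-1 * \sum_(z <- S) `| f z.1 - z.2 |)%R.

Definition realizable (F : set (T -> R)) (D : set (T * R) -> \bar R) : Prop :=
  exists2 f, F f & risk D f = 0.

Definition marginal (D : set (T * R) -> \bar R) : set T -> \bar R :=
  pushforward D fst.

Definition bracket_contains (l u f : T -> R) : Prop :=
  forall x, (l x <= f x <= u x)%R.

Definition alpha_bracket (mu : set T -> \bar R) (alpha : R) (l u : T -> R) : Prop :=
  [/\ measurable_fun setT l, measurable_fun setT u,
      (forall x, (0 <= l x <= 1)%R /\ (0 <= u x <= 1)%R) &
      \int[mu]_x (`| u x - l x |)%:E <= alpha%:E].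

(* bracketing number N_[](F, L_1(mu), alpha): minimal number of alpha-brackets
   covering F (+oo if no finite cover exists) *)
Definition bracketing_number (F : set (T -> R)) (mu : set T -> \bar R) (alpha : R)
  : \bar R :=
  ereal_inf [set (k%:R)%:E | k in [set k : nat |
    exists (l u : 'I_k -> T -> R),
      (forall i, alpha_bracket mu alpha (l i) (u i)) /\
      (forall f, F f -> exists i, bracket_contains (l i) (u i) f)]].

End defs.

Definition elog {R : realType} (x : \bar R) : \bar R :=
  match x with
  | r%:E => (ln r)%:E
  | +oo => +oo
  | -oo => -oo
  end%E.

Fixpoint prodn {R : realType} {d} {X : measurableType d} (P : set X -> \bar R) (n : nat)
  : set (n.-tuple X) -> \bar R :=
  match n with
  | 0 => fun A => (if `[< A [tuple] >] then 1 else 0)%:E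
  | n'.+1 => fun A => (\int[P]_x @prodn R d X P n' [set t : n'.-tuple X | A (cons_tuple x t)])%E
  end.
Arguments prodn {R d X} P n _.

(* Main.v *)
Require Import Defs.
From HB Require Import structures.
From mathcomp Require Import all_boot all_order all_algebra.
From mathcomp Require Import all_classical all_reals all_analysis.
Import Order.TTheory GRing.Theory Num.Theory.
From mathcomp Require Import ring lra.
Import measurable_realfun.
Local Open Scope classical_set_scope.
Local Open Scope ring_scope.

Definition gfun {R : realType} (l u y : R) : R :=
  Num.min (Num.max (Num.max (l - y) (y - u)) 0) 1.

Lemma gprop {R : realType} (l u f y : R) : 0 <= l -> l <= f -> f <= u -> u <= 1 ->
  [/\ 0 <= gfun l u y, gfun l u y <= 1, gfun l u y <= `|f - y| &
     (0 <= y <= 1 -> `|f - y| <= gfun l u y + (u - l))].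
Proof.
move=> l0 lf fu u1; rewrite /gfun.
set M := Num.max (Num.max (l - y) (y - u)) 0.
have M1 : l - y <= M by rewrite /M !le_max lexx.
have M2 : y - u <= M by rewrite /M !le_max lexx orbT.
have M3 : 0 <= M by rewrite /M !le_max lexx !orbT.
have Mf : M <= `|f - y|.
  have [H4|H4] := lerP 0 (f - y).
    rewrite ger0_norm // /M !ge_max; apply/andP; split; [apply/andP; split|]; lra.
  rewrite ltr0_norm // /M !ge_max; apply/andP; split; [apply/andP; split|]; lra.
split.
- by rewrite le_min M3 ler01.
- by rewrite ge_min lexx orbT.
- by apply: le_trans Mf; rewrite ge_min lexx.
- case/andP=> y0 y1.
  have MM : M <= 1 by rewrite /M !ge_max; apply/andP; split; [apply/andP; split|]; lra.
  have -> : Num.min M 1 = M by apply/min_idPl.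
  have [H4|H4] := lerP 0 (f - y); first by rewrite ger0_norm //; lra.
  by rewrite ltr0_norm //; lra.
Qed.

Lemma gfun01 {R : realType} (l u y : R) : 0 <= gfun l u y <= 1.
Proof.
rewrite /gfun le_min ge_min lexx orbT ler01 andbT /=.
by rewrite le_max lexx orbT.
Qed.

Lemma expbound {R : realType} (x : R) : 0 <= x <= 1 ->
  expR (- (1/100) * x) <= 1 - x / 101.
Proof.
case/andP => x0 x1.
have h1 : 1 + x / 100 <= expR (x / 100) by apply: expR_ge1Dx.
have -> : - (1/100) * x = - (x / 100) by field.
rewrite expRN.
have e0 : 0 < expR (x / 100) by apply: expR_gt0.
rewrite -div1r ler_pdivrMr //.
apply: le_trans (_ : 1 <= (1 - x / 101) * (1 + x / 100)) _.
  nra.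
by rewrite ler_wpM2l // subr_ge0 ler_pdivrMr //; lra.
Qed.
Lemma termbound {R : realType} (n : nat) (p m LL : R) : 0 <= m <= 1 - p / 101 ->
  expR (1/100 * (100/101 * (n%:R * p) - 100 * LL)) * m ^+ n <= expR (- LL).
Proof.
case/andP=> m0 m1.
have h1 : m ^+ n <= expR (- (p / 101)) ^+ n.
  apply: lerXn2r; rewrite ?nnegrE ?expR_ge0 //.
  apply: le_trans m1 _; have := expR_ge1Dx (- (p / 101)); lra.
rewrite -expRM_natr in h1.
apply: le_trans (ler_wpM2l (expR_ge0 _) h1) _.
rewrite -expRD.
have -> : 1/100 * (100/101 * (n%:R * p) - 100 * LL) + - (p / 101) * n%:R = - LL by field.
by [].
Qed.

Section core.
Context {R : realType} {d : measure_display} {X : measurableType d} (D : probability X R).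

Lemma bint (h : X -> R) (C : R) : measurable_fun setT h -> (forall x, `|h x| <= C) ->
  D.-integrable setT (EFin \o h).
Proof.
move=> mh hC; apply: measurable_bounded_integrable => //.
  by move: (probability_setT D) => /= ->; rewrite ltry.

rewrite /bounded_near; near=> M => x _ /=; rewrite (le_trans (hC x)) //.
Unshelve. all: by end_near. Qed.

Lemma le_integral_nm (f : X -> \bar R) (h : X -> R) :
  measurable_fun setT h -> (forall x, 0 <= h x) -> (forall x, 0 <= f x)%E ->
  (forall x, (h x)%:E <= f x)%E ->
  (\int[D]_x (h x)%:E <= \int[D]_x f x)%E.
Proof.
move=> mh h0 f0 hf.
rewrite ge0_integralE; last by move=> x _; rewrite lee_fin.
rewrite ge0_integralE; last by move=> x _.
apply: ub_ereal_sup => _ [s /= sh <-].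
apply: ereal_sup_ubound => /=; exists s => //= x.
apply: le_trans (sh x) _.
by rewrite /patch; case: ifP => // _; apply: le_trans (hf x).
Qed.

Lemma prodn_ge0 n (A : set (n.-tuple X)) : (0 <= prodn D n A)%E.
Proof.
elim: n A => [|n IH] A /=; first by case: asboolP.
by apply: integral_ge0 => x _; exact: IH.
Qed.

Lemma RintE (h : X -> R) : D.-integrable setT (EFin \o h) ->
  (\int[D]_x (h x)%:E)%E = (Rintegral D setT h)%:E.
Proof. by move=> ih; rewrite /Rintegral fineK //; exact: integrable_fin_num. Qed.

Lemma Rint_sum (I : Type) (s : seq I) (F : I -> X -> R) :
  (forall i, D.-integrable setT (EFin \o F i)) ->
  Rintegral D setT (fun x => \sum_(i <- s) F i x) = \sum_(i <- s) Rintegral D setT (F i).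
Proof.
move=> iF; rewrite /Rintegral.
under eq_integral do rewrite -sumEFin.
rewrite integral_sum //.
rewrite -EFin_sum_fine //.
move=> i _; exact: (integrable_fin_num measurableT (iF i)).
Qed.

Lemma mbound (h : X -> R) : measurable_fun setT h -> (forall x, 0 <= h x <= 1) ->
  0 <= Rintegral D setT (fun x => expR (- (1/100) * h x)) <= 1 - Rintegral D setT h / 101.
Proof.
move=> mh h01.
have ie : D.-integrable setT (EFin \o (fun x => expR (- (1/100) * h x))).
  apply: (@bint _ 1).
    apply: measurableT_comp; first exact: measurable_expR.
    by apply: measurable_funM => //; exact: measurable_cst.
  move=> x; rewrite ger0_norm ?expR_ge0 // -expR0 ler_expR mulNr oppr_le0 mulr_ge0 //.
  by case/andP: (h01 x).
have ih : D.-integrable setT (EFin \o h).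
  by apply: (@bint _ 1) => // x; case/andP: (h01 x) => h0 h1; rewrite ger0_norm.
apply/andP; split; first by apply: Rintegral_ge0 => x _; exact: expR_ge0.
have i1 : D.-integrable setT (EFin \o (fun x => 1 - 101^-1 * h x)).
  apply: (@bint _ 1).
    apply: measurable_funB; first exact: measurable_cst.
    by apply: measurable_funM => //; exact: measurable_cst.
  move=> x; case/andP: (h01 x) => h0 h1; rewrite ger0_norm; lra.
have H1 : Rintegral D setT (fun x => expR (- (1/100) * h x)) <= Rintegral D setT (fun x => 1 - 101^-1 * h x).
  apply: (le_Rintegral measurableT ie i1) => x _.
  by have := @expbound _ (h x) (h01 x); rewrite [_ / 101]mulrC.
apply: (le_trans H1).
have ih' : D.-integrable setT (EFin \o (fun x => 101^-1 * h x)).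
  apply: (@bint _ 1).
    by apply: measurable_funM => //; exact: measurable_cst.
  move=> x; case/andP: (h01 x) => h0 h1; rewrite ger0_norm; lra.
rewrite RintegralB //; last first.
  by apply: (@bint _ 1) => [|x]; [exact: measurable_cst|rewrite normr1].
rewrite Rintegral_cst //= probability_setT /= mul1r RintegralZl //.
by rewrite mulrC.
Qed.

Lemma prodn_lb (N : nat) (g : 'I_N -> X -> R) (lam : R) :
  0 < lam -> (forall i, measurable_fun setT (g i)) -> (forall i x, 0 <= g i x <= 1) ->
  forall n (a : 'I_N -> R),
  ((1 - \sum_(i < N) expR (lam * a i) *
      (Rintegral D setT (fun x => expR (- lam * g i x))) ^+ n)%:E
    <= prodn D n [set t : n.-tuple X | forall i, (a i < \sum_(z <- t) g i z)%R])%E.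
Proof.
move=> lam0 mg g01.
set m := fun i => Rintegral D setT (fun x => expR (- lam * g i x)).
elim=> [|n IH] a.
  rewrite /=; case: asboolP => H.
    rewrite lee_fin gerBl // sumr_ge0 // => i _.
    by rewrite expr0 mulr1 expR_ge0.
  have [i Hi] : exists i, ~ (a i < 0).
    apply/existsNP => H'; apply: H => i; rewrite big_nil; exact: H'.
  rewrite lee_fin subr_le0 (bigD1 i) //= expr0 mulr1.
  rewrite -[1]addr0 lerD //; last by rewrite sumr_ge0 // => j _; rewrite expr0 mulr1 expR_ge0.
  apply: le_trans (expR_ge1Dx _); rewrite lerDl mulr_ge0 //; first exact: ltW.
  by rewrite leNgt; apply/negP.
have mexp i : measurable_fun setT (fun x => expR (- lam * g i x)).
  apply: measurableT_comp; first exact: measurable_realfun.measurable_expR.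
  by apply: measurable_funM => //; exact: measurable_cst.
have exp01 i x : 0 <= expR (- lam * g i x) <= 1.
  rewrite expR_ge0 /= -expR0 ler_expR mulNr oppr_le0 mulr_ge0 //; first exact: ltW.
  by case/andP: (g01 i x).
have iexp i : D.-integrable setT (EFin \o (fun x => expR (- lam * g i x))).
  apply: (@bint _ 1) => // x; have /andP[e0 e1] := exp01 i x.
  by rewrite ger0_norm.
have m0 i : 0 <= m i by apply: Rintegral_ge0 => x _; case/andP: (exp01 i x).
rewrite /=.
pose c i := expR (lam * a i) * m i ^+ n.
have c0 i : 0 <= c i by rewrite mulr_ge0 ?expR_ge0 // exprn_ge0.
pose h0 x := 1 - \sum_(i < N) c i * expR (- lam * g i x).
pose h x := Num.max (h0 x) 0.
have mh0 : measurable_fun setT h0.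
  apply: measurable_realfun.measurable_funB; first exact: measurable_cst.
  apply: measurable_sum => i; apply: measurable_funM => //; exact: measurable_cst.
have h0b x : `|h0 x| <= 1 + \sum_(i < N) c i.
  rewrite (le_trans (ler_normB _ _)) // normr1 lerD2l (le_trans (ler_norm_sum _ _ _)) //.
  apply: ler_sum => i _; rewrite normrM ger0_norm // ger0_norm; last by case/andP: (exp01 i x).
  by rewrite ler_piMr //; case/andP: (exp01 i x).
have ih0 : D.-integrable setT (EFin \o h0) by exact: bint h0b.
have ih : D.-integrable setT (EFin \o h).
  apply: (@bint _ (1 + \sum_(i < N) c i)).
    by apply: measurable_realfun.measurable_maxr => //; exact: measurable_cst.
  move=> x; rewrite /h; case: (leP (h0 x) 0) => _ //.
  by rewrite normr0 addr_ge0 // sumr_ge0.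
have -> : (1 - \sum_(i < N) expR (lam * a i) * m i ^+ n.+1)%:E = (\int[D]_x (h0 x)%:E)%E.
  rewrite RintE // RintegralB //; last first.
  - apply: (@bint _ (\sum_(i < N) c i)).
      by apply: measurable_sum => i; apply: measurable_funM => //; exact: measurable_cst.
    move=> x; rewrite (le_trans (ler_norm_sum _ _ _)) //.
    apply: ler_sum => i _; rewrite normrM ger0_norm // ger0_norm; last by case/andP: (exp01 i x).
    by rewrite ler_piMr //; case/andP: (exp01 i x).
  - by apply: (@bint _ 1) => [|x]; [exact: measurable_cst | rewrite normr1].
  rewrite Rintegral_cst //= probability_setT /= mul1r Rint_sum; last first.
    move=> i; apply: (@bint _ (c i)).
      by apply: measurable_funM => //; exact: measurable_cst.
    move=> x; rewrite normrM ger0_norm // ger0_norm; last by case/andP: (exp01 i x).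
    by rewrite ler_piMr //; case/andP: (exp01 i x).
  congr (_ - _)%:E; apply: eq_bigr => i _.
  by rewrite RintegralZl // /c -/(m i) exprSr mulrA.
apply: (@le_trans _ _ (\int[D]_x (h x)%:E)%E).
  apply: le_integral => // x _; rewrite lee_fin; by rewrite le_max lexx.
apply: le_integral_nm.
- by apply: measurable_realfun.measurable_maxr => //; exact: measurable_cst.
- by move=> x; by rewrite le_max lexx orbT.
- by move=> x; exact: prodn_ge0.
move=> x; rewrite /h; case: (leP (h0 x) 0) => H; first exact: prodn_ge0.
have -> : [set t : n.-tuple X | forall i, (a i < \sum_(z <- x :: t) g i z)%R] =
    [set t : n.-tuple X | forall i, (a i - g i x < \sum_(z <- t) g i z)%R].
  apply/seteqP; split => t /= Ht i; have := Ht i; rewrite big_cons; lra.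
apply: le_trans (IH (fun i => a i - g i x)).
rewrite lee_fin /h0 lerB // le_eqVlt; apply/orP; left; apply/eqP.
apply: eq_bigr => i _; rewrite /c -/(m i) mulrBr expRD mulNr.
by rewrite -!mulrA [X in _ * X = _]mulrC.
Qed.

Lemma meas_tupset n N (g : 'I_N -> X -> R) (a : 'I_N -> R) :
  (forall i, measurable_fun setT (g i)) ->
  measurable [set t : n.-tuple X | forall i, (a i < \sum_(z <- t) g i z)%R].
Proof.
move=> mg.
have mF i : measurable_fun setT (fun t : n.-tuple X => \sum_(z <- t) g i z).
  have -> : (fun t : n.-tuple X => \sum_(z <- t) g i z) =
            (fun t => \sum_(j < n) g i (tnth t j)).
    by apply/funext => t; rewrite big_tuple.
  by apply: measurable_sum => j; exact: measurableT_comp (mg i) (measurable_tnth j).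
have -> : [set t : n.-tuple X | forall i, (a i < \sum_(z <- t) g i z)%R] =
    \bigcap_(i in [set: 'I_N]) ((fun t : n.-tuple X => \sum_(z <- t) g i z) @^-1`
       `]a i, +oo[%classic).
  apply/seteqP; split => t /=.
    by move=> H i _ /=; rewrite in_itv /= andbT; exact: H.
  by move=> H i; have := H i I; rewrite /= in_itv /= andbT.
apply: fin_bigcap_measurable; first exact: finite_finset.
move=> i _; rewrite -[X in measurable X]setTI.
exact: (mF i) measurableT _ (measurable_itv _).
Qed.
End core.
Section bn.
Context {R : realType} {d : measure_display} {T : measurableType d}.
Variables (F : set (T -> R)) (mu : set T -> \bar R).

Lemma bn_ge1 (f0 : T -> R) alpha : F f0 -> (1 <= bracketing_number F mu alpha)%E.
Proof.
move=> Ff0; apply: le_ereal_inf_tmp => _ [k [l [u [_ hc]]] <-].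
case: k l u hc => [|k] l u hc; last by rewrite lee_fin ler1n.
by have [[]] := hc _ Ff0.
Qed.

Lemma bn_attain alpha : (bracketing_number F mu alpha < +oo)%E ->
  exists k (l u : 'I_k -> T -> R),
    [/\ (forall i, alpha_bracket mu alpha (l i) (u i)),
        (forall f, F f -> exists i, bracket_contains (l i) (u i) f) &
        bracketing_number F mu alpha = (k%:R)%:E].
Proof.
move=> hlt.
set K := [set k : nat | exists (l u : 'I_k -> T -> R),
      (forall i, alpha_bracket mu alpha (l i) (u i)) /\
      (forall f, F f -> exists i, bracket_contains (l i) (u i) f)].
have exK : exists k, `[< K k >].
  apply/not_existsP => hK; move: hlt; rewrite /bracketing_number.
  suff -> : [set (k%:R)%:E | k in K] = set0 :> set (\bar R) by rewrite ereal_inf0.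
  apply/seteqP; split => // x [k Kk _]; apply: (hK k); exact/asboolP.
have [k Kk kmin] := ex_minnP exK.
move/asboolP: Kk => Kk.
have [l [u [hb hc]]] := Kk.
exists k, l, u; split => //.
apply/eqP; rewrite eq_le; apply/andP; split.
  by apply: ereal_inf_lbound; exists k.
apply: le_ereal_inf_tmp => _ [j Kj <-]; rewrite lee_fin ler_nat.
by apply: kmin; apply/asboolP.
Qed.
End bn.

Theorem proposition2 (R : realType) (M : pointedMetricType R)
  (F : set (Borel M -> R)) (D : probability (Borel M * R)%type R) :
  (forall f, F f -> measurable_fun setT f /\ (forall x, 0 <= f x <= 1)) ->
  D [set z | 0 <= z.2 <= 1] = 1%E ->
  realizable F D ->
  forall (delta : R) (n : nat), 0 < delta < 1 -> (0 < n)%N ->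
  exists A : set (n.-tuple (Borel M * R)%type),
    [/\ measurable A,
        ((1 - delta)%:E <= prodn D n A)%E &
        forall S, A S -> forall f, F f ->
          (risk D f <=
             (101 / 100 * emp_risk S f)%R%:E
             + ereal_inf [set (alpha%:E
                   + (205 / n%:R)%R%:E * elog (bracketing_number F (marginal D) alpha))%E
                 | alpha in [set alpha : R | (0 <= alpha)%R]]
             + (205 * ln (delta^-1) / n%:R)%R%:E)%E].
Proof.
move=> hF hY [fs Ffs _] delta n /andP[d0 d1] n0.
set mu := marginal D.
set BN := bracketing_number F mu.
have nn0 : 0 < n%:R :> R by rewrite ltr0n.
have BN1 a : (1 <= BN a)%E by exact: bn_ge1 Ffs.
have elog0 a : (0 <= elog (BN a))%E.
  have := BN1 a; case: (BN a) => //= r; rewrite !lee_fin => r1; exact: ln_ge0.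
set S := [set _ | alpha in _].
set I := ereal_inf S.
have I0 : (0 <= I)%E.
  apply: le_ereal_inf_tmp => _ [a a0 <-]; apply: adde_ge0; first by rewrite lee_fin.
  by apply: mule_ge0 => //; rewrite lee_fin divr_ge0.
have mfst : measurable_fun setT (@fst (Borel M) R) := measurable_fst.
have BNone : BN 1 = 1%:E.
  apply/eqP; rewrite eq_le BN1 andbT.
  apply: ereal_inf_lbound; exists 1%N => //.
  exists (fun _ _ => 0), (fun _ _ => 1); split; last first.
    move=> f Ff; exists ord0 => x; exact: (hF f Ff).2.
  move=> i; split; [exact: measurable_cst|exact: measurable_cst| |].
    by move=> x; rewrite !lexx ler01.
  rewrite ge0_integral_pushforward //; try by move=> x _; rewrite lee_fin.
  rewrite preimage_setT (_ : _ \o fst = cst 1%:E); last first.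
    by apply/funext => x /=; rewrite subr0 normr1.
  rewrite integral_cst //= mul1e.
  by move: (probability_setT D) => /= ->.
have I1 : (I <= 1%:E)%E.
  apply: ereal_inf_lbound; exists 1 => /=; first exact: ler01.
  by rewrite BNone /= ln1 mule0 adde0.
have [r Ir] : exists r, I = r%:E.
  by move: I0 I1; case: I => [r||] // _ _; exists r.
set L0 := ln (delta^-1).
have L0pos : 0 < L0 by apply: ln_gt0; rewrite invf_gt1.
have eps0 : 0 < 104 * L0 / n%:R by rewrite divr_gt0 // mulr_gt0.
have Ifin : I \is a fin_num by rewrite Ir.
have [v Sv vlt] := lb_ereal_inf_adherent eps0 Ifin.
case: Sv vlt => a0 /= a00 <-{v} vlt.
have BNfin : (BN a0 < +oo)%E.
  rewrite ltNge leye_eq; apply/negP => /eqP BNoo; move: vlt.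
  rewrite /BN -/BN BNoo /= mulry gtr0_sg ?divr_gt0 // mul1e addey //.
  by rewrite -/I Ir -EFinD ltNge leey.
have [k [l [u [hb hc BNk]]]] := @bn_attain _ _ _ F mu a0 BNfin.
rewrite /BN BNk /= in vlt.
have k0 : (0 < k)%N by case: k l u hb hc BNk vlt => [|k] // l u hb hc; have [[]] := hc _ Ffs.
have lnk0 : 0 <= ln (k%:R : R) by apply: ln_ge0; rewrite ler1n.
pose X := (Borel M * R)%type.
have ml i : measurable_fun setT (l i) by case: (hb i).
have mu_ i : measurable_fun setT (u i) by case: (hb i).
have lu01 i x : (0 <= l i x <= 1) /\ (0 <= u i x <= 1) by case: (hb i) => _ _ H _; exact: H.
pose g i (z : X) := gfun (l i z.1) (u i z.1) z.2.
have mg i : measurable_fun setT (g i).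
  rewrite /g /gfun; apply: measurable_minr; last exact: measurable_cst.
  apply: measurable_maxr; last exact: measurable_cst.
  apply: measurable_maxr; apply: measurable_funB.
  - exact: measurableT_comp (ml i) measurable_fst.
  - exact: measurable_snd.
  - exact: measurable_snd.
  - exact: measurableT_comp (mu_ i) measurable_fst.
have g01 i z : 0 <= g i z <= 1 by exact: gfun01.
pose p i := Rintegral D setT (g i).
pose LL := ln (k%:R / delta).
pose a i := 100 / 101 * (n%:R * p i) - 100 * LL.
exists [set t : n.-tuple X | forall i, (a i < \sum_(z <- t) g i z)%R].
split.
- exact: meas_tupset.
- have lam0 : 0 < 1 / 100 :> R by rewrite divr_gt0.
  apply: le_trans (@prodn_lb _ _ _ D k g (1/100) lam0 mg g01 n a).
  rewrite lee_fin lerB //.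
  apply: (@le_trans _ _ (\sum_(i < k) delta / k%:R)).
    apply: ler_sum => i _.
    apply: le_trans (@termbound _ n _ _ LL (@mbound _ _ _ D (g i) (mg i) (g01 i))) _.
    rewrite expRN /LL lnK ?invf_div //.
    by rewrite posrE divr_gt0 // ltr0n.
  rewrite sumr_const card_ord -[_ *+ k]mulr_natr mulfVK //.
  by rewrite pnatr_eq0 -lt0n.
- move=> t At f Ff.
  have [mf f01] := hF f Ff.
  have [i hi] := hc f Ff.
  have [_ _ _ hint] := hb i.
  have lu z : l i z <= u i z by case/andP: (hi z) => h1 h2; exact: le_trans h2.
  have gp (z : X) := @gprop R (l i z.1) (u i z.1) (f z.1) z.2
     (proj1 (andP (lu01 i z.1).1)) (proj1 (andP (hi z.1))) (proj2 (andP (hi z.1)))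
     (proj2 (andP (lu01 i z.1).2)).
  set Y01 := [set z : X | 0 <= z.2 <= 1].
  have mY : measurable Y01.
    have -> : Y01 = setT `&` (snd @^-1` `[0, 1]%classic).
      by apply/seteqP; split => z /=; rewrite ?in_itv //=; move=> [].
    exact: measurable_snd measurableT _ (measurable_itv _).
  have hYc : D (~` Y01) = 0%E by rewrite probability_setC // hY subee.
  have hd : measurable_fun setT (fun z : X => u i z.1 - l i z.1).
    by apply: measurable_funB; exact: measurableT_comp measurable_fst.
  have ihd : D.-integrable setT (EFin \o (fun z : X => u i z.1 - l i z.1)).
    apply: (@bint _ _ _ D _ 1) => // z; rewrite ger0_norm ?subr_ge0 ?lu //.
    have := lu01 i z.1; lra.
  have ig : D.-integrable setT (EFin \o g i).
    by apply: (@bint _ _ _ D _ 1) => // z; rewrite ger0_norm; case/andP: (g01 i z).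
  have hr : (risk D f <= \int[D]_z ((g i z + (u i z.1 - l i z.1))%:E))%E.
    rewrite /risk; apply: ae_ge0_le_integral => //.
    - apply/measurable_EFinP; apply: measurableT_comp; first exact: normr_measurable.
      apply: measurable_funB; last exact: measurable_snd.
      exact: measurableT_comp mf measurable_fst.
    - move=> z _; rewrite lee_fin addr_ge0 ?subr_ge0 ?lu //.
      by case/andP: (g01 i z).
    - by apply/measurable_EFinP; apply: measurable_funD.
    - exists (~` Y01); split => //; first exact: measurableC.
      move=> z /= H Yz; apply: H => _; rewrite lee_fin.
      by have [_ _ _ ->] := gp z.
  have hint2 : Rintegral D setT (fun z : X => u i z.1 - l i z.1) <= a0.
    have mud : measurable_fun setT (fun y => (`|u i y - l i y|)%:E).
      apply/measurable_EFinP; apply: measurableT_comp; first exact: normr_measurable.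
      by apply: measurable_funB.
    rewrite -lee_fin -RintE //; apply: le_trans hint.
    rewrite ge0_integral_pushforward //; try by move=> x _; rewrite lee_fin.
    rewrite preimage_setT; apply: ge0_le_integral => //.
    - by move=> z _; rewrite lee_fin subr_ge0.
    - by apply/measurable_EFinP.
    - exact: measurableT_comp mud measurable_fst.
    - by move=> z _ /=; rewrite lee_fin ger0_norm // subr_ge0.
  have hR : (risk D f <= (p i + a0)%:E)%E.
    apply: le_trans hr _.
    rewrite (@RintE _ _ _ D (fun z => g i z + (u i z.1 - l i z.1))); last first.
      apply: (@bint _ _ _ D _ 2); first by apply: measurable_funD.
      move=> z; rewrite ger0_norm; last by rewrite addr_ge0 ?subr_ge0 ?lu //; case/andP: (g01 i z).
      have := lu01 i z.1; have := g01 i z; move=> /andP[? ?] [/andP[? ?] /andP[? ?]]; lra.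
    rewrite RintegralD // lee_fin lerD2l; exact: hint2.
  have hE : \sum_(z <- t) g i z <= \sum_(z <- t) `|f z.1 - z.2|.
    by apply: ler_sum => z _; have [_ _ -> _] := gp z.
  have ht := At i.
  apply: le_trans hR _.
  rewrite Ir /emp_risk -!EFinD lee_fin.
  rewrite -/I Ir -EFinM -EFinD -EFinD lte_fin in vlt.
  have LLe : LL = ln (k%:R : R) + L0.
    by rewrite /LL /L0 lnM // posrE ?ltr0n ?invr_gt0.
  set E := \sum_(z <- t) `|f z.1 - z.2|.
  set nn := n%:R : R.
  have hp : p i * nn < 101/100 * E + 101 * ln (k%:R : R) + 101 * L0.
    move: ht hE; rewrite /a LLe -/E -/nn (mulrC nn); lra.
  have hp' : p i < (101/100 * E + 101 * ln (k%:R : R) + 101 * L0) / nn.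
    by rewrite ltr_pdivlMr.
  have e1 : (101/100 * E + 101 * ln (k%:R : R) + 101 * L0) / nn =
     101/100 * (nn^-1 * E) + 101 * (ln (k%:R : R) / nn) + 101 * (L0 / nn).
    by field; rewrite lt0r_neq0.
  have e2 : 205 / nn * ln (k%:R : R) = 205 * (ln (k%:R : R) / nn).
    by field; rewrite lt0r_neq0.
  have e3 : 104 * L0 / nn = 104 * (L0 / nn) by field; rewrite lt0r_neq0.
  have e4 : 205 * L0 / nn = 205 * (L0 / nn) by field; rewrite lt0r_neq0.
  have wk0 : 0 <= ln (k%:R : R) / nn by rewrite divr_ge0 // ltW.
  rewrite e1 in hp'; rewrite e2 e3 in vlt; rewrite e4.
  lra.
Qed.
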